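(* Let $n \ge m \ge 2$ with $n$ odd, and let $K_{n,m}$ be the complete bipartite graph with bipartition $(X,Y)$, $|X|=n$, $|Y|=m$. If $U$ is a strong edge geodetic set of $K_{n,m}$ with $X \subseteq U$, then $|U| \ge \frac{2n}{n+1} + m$.
   Context: All graphs are finite, simple and connected. A set $S \subseteq V(G)$ is a strong edge geodetic set of $G$ if one can assign to every unordered pair $\{u,v\}$ of distinct vertices of $S$ either one shortest $u,v$-path $P_{uv}$ in $G$ or no path, in such a way that every edge of $G$ lies on at least one of the assigned paths. *)

(* Defs.v *)
From mathcomp Require Import all_boot all_order all_algebra.
Set Implicit Arguments. Unset Strict Implicit. Unset Printing Implicit Defensive.

(* [q] is a u,v-walk given as its full vertex list u = q_0, q_1, ..., q_k = v. *)
Definition walk_uv (T : finType) (e : rel T) (u v : T) (q : seq T) : Prop :=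
  exists q', q = u :: q' /\ path e u q' /\ last u q' = v.

(* A shortest u,v-path: a u,v-walk whose length is minimal among all u,v-walks
   (such a walk is automatically a path). *)
Definition shortest_path (T : finType) (e : rel T) (u v : T) (q : seq T) : Prop :=
  walk_uv e u v q /\
  forall q2 : seq T, walk_uv e u v q2 -> size q <= size q2.

Definition edge_on (T : finType) (a b : T) (q : seq T) : bool :=
  ((a, b) \in zip q (behead q)) || ((b, a) \in zip q (behead q)).

(* Strong edge geodetic set: one assigns to every unordered pair {u,v} of
   distinct vertices of S (represented by the 2-set [set u; v]) either one
   shortest u,v-path or no path, so that every edge lies on an assigned path. *)
Definition strong_edge_geodetic (T : finType) (e : rel T) (S : {set T}) : Prop :=
  exists f : {set T} -> option (seq T),
    (forall u v q, u \in S -> v \in S -> u != v -> f [set u; v] = Some q ->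
        shortest_path e u v q \/ shortest_path e v u q) /\
    (forall a b, e a b ->
        exists u v q, [/\ u \in S, v \in S, u != v, f [set u; v] = Some q
                        & edge_on a b q]).

(* Complete bipartite graph K_{n,m} on vertex set 'I_n + 'I_m, with
   X = inl-vertices (|X| = n), Y = inr-vertices (|Y| = m). *)
Definition Knm_rel (n m : nat) : rel ('I_n + 'I_m)%type :=
  fun x y => match x, y with
             | inl _, inr _ => true
             | inr _, inl _ => true
             | _, _ => false
             end.

Definition Kpart_X (n m : nat) : {set ('I_n + 'I_m)%type} :=
  [set x | if x is inl _ then true else false].

(* Main.v *)
Require Import Defs.
From mathcomp Require Import all_boot all_order all_algebra.
From mathcomp Require Import zify ring lra.
Import GRing.Theory Num.Theory.
Local Open Scope ring_scope.

Lemma zip_memr {T : eqType} {a b : T} {s t : seq T} :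
  (a, b) \in zip s t -> b \in t.
Proof.
elim: s t => [|x s IH] [|y t] //=.
rewrite in_cons => /orP [/eqP [_ ->]|/IH H]; first by rewrite eqxx.
by rewrite H orbT.
Qed.

Lemma zip_meml {T : eqType} {a b : T} {s t : seq T} :
  (a, b) \in zip s t -> a \in s.
Proof.
elim: s t => [|x s IH] [|y t] //=.
rewrite in_cons => /orP [/eqP [-> _]|/IH H]; first by rewrite eqxx.
by rewrite H orbT.
Qed.

Lemma edge_on_mem {T : finType} {a b : T} {q} : edge_on a b q -> (a \in q) && (b \in q).
Proof.
rewrite /edge_on => /orP [H|H].
  by rewrite (zip_meml H) (mem_behead (zip_memr H)).
by rewrite (zip_meml H) (mem_behead (zip_memr H)).
Qed.

Lemma sp_mid {n m : nat} (i0 : 'I_n) (j0 : 'I_m) {u v y : ('I_n + 'I_m)%type} {q} :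
  shortest_path (@Knm_rel n m) u v q -> y \in q -> y != u -> y != v ->
  q = [:: u; y; v] /\ Knm_rel u y && Knm_rel y v.
Proof.
move=> [[q' [Eq [Hp Hl]]] Hmin] Hy Hyu Hyv.
have [w [Hw Hsw]] : exists w, walk_uv (@Knm_rel n m) u v w /\ (size w <= 3)%N.
  case: u {Eq Hp Hl Hmin Hyu} => [a|a]; case: v {Hyv} => [b|b].
  - by exists [:: inl a; inr j0; inl b]; split=>//; exists [:: inr j0; inl b].
  - by exists [:: inl a; inr b]; split=>//; exists [:: inr b].
  - by exists [:: inr a; inl b]; split=>//; exists [:: inl b].
  - by exists [:: inr a; inl i0; inr b]; split=>//; exists [:: inl i0; inr b].
have := leq_trans (Hmin _ Hw) Hsw; clear Hmin.
subst q.
move: Hy Hp Hl; case: q' => [|c [|d [|x r]]] //=.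
- by rewrite inE (negbTE Hyu).
- by move=> Hy _ Hl; subst c; move: Hy; rewrite !inE (negbTE Hyu) (negbTE Hyv).
- move=> Hy Hp Hl _; subst d; move: Hy; rewrite !inE (negbTE Hyu) (negbTE Hyv) orbF.
  by move=> /eqP ->; move/andP: Hp => [-> /andP [-> _]].
Qed.

Lemma card_bigcup_le {I T : finType} (A : {set I}) (F : I -> {set T}) :
  (#|\bigcup_(i in A) F i| <= \sum_(i in A) #|F i|)%N.
Proof.
elim/big_rec2: _ => [|i B k _ IH]; first by rewrite cards0.
by rewrite (leq_trans (leq_card_setU _ _)) // leq_add.
Qed.

Lemma Ksym (n m : nat) (x y : ('I_n + 'I_m)%type) : Knm_rel x y = Knm_rel y x.
Proof. by case: x; case: y. Qed.

Theorem mainTheorem5 (n m : nat) (U : {set ('I_n + 'I_m)%type}) :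
  (2 <= m)%N -> (m <= n)%N -> odd n ->
  strong_edge_geodetic (@Knm_rel n m) U ->
  Kpart_X n m \subset U ->
  ((2 * n)%:R / (n + 1)%:R + m%:R <= (#|U|%:R : rat)).
Proof.
move=> Hm Hmn Hodd [f [Hf Hcov]] HX.
have n0 : (0 < n)%N by lia.
pose i0 : 'I_n := Ordinal n0.
have m0 : (0 < m)%N by lia.
pose j0 : 'I_m := Ordinal m0.
pose Yout := [set j : 'I_m | inr j \notin U].
pose D := [set S : {set 'I_n} | #|S| == 2%N].
pose g := fun S : {set 'I_n} => if f (inl @: S) is Some q then ohead (behead q) else None.
pose P := fun j : 'I_m => [set S in D | g S == Some (inr j)].
have Hcover : forall j, j \in Yout -> forall i : 'I_n, exists2 S, S \in P j & i \in S.
  move=> j; rewrite inE => Hj i.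
  have [u [v [q [Hu Hv Huv Hfq Hon]]]] := Hcov (inl i) (inr j) isT.
  have /andP [Hiq Hjq] := edge_on_mem Hon.
  have Hju : inr j != u by apply: contraNneq Hj => ->.
  have Hjv : inr j != v by apply: contraNneq Hj => ->.
  have Hsh := Hf u v q Hu Hv Huv Hfq.
  have [Eq He] : (q = [:: u; inr j; v] \/ q = [:: v; inr j; u]) /\
                 (Knm_rel u (inr j) && Knm_rel (inr j) v).
    case: Hsh => Hs.
      by have [-> ->] := sp_mid i0 j0 Hs Hjq Hju Hjv; split; [left|].
    have [-> /andP [H1 H2]] := sp_mid i0 j0 Hs Hjq Hjv Hju; split; first by right.
    by apply/andP; split; rewrite Ksym.
  clear Hsh Hju Hjv Hon Hjq.
  move: Hu Hv Huv Hfq He Eq Hiq; case: u => a; case: v => b => Hu Hv Huv Hfq He Eq Hiq //.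
  exists [set a; b].
    have Hab : a != b by apply: contraNneq Huv => ->.
    rewrite !inE cards2 Hab /=.
    rewrite /g imsetU1 imset_set1 Hfq.
    by case: Eq => ->.
  case: Eq Hiq => -> ; rewrite !inE => /or3P [/eqP [->]|/eqP []|/eqP [->]]; by rewrite ?eqxx ?orbT.
have Hlow : forall j, j \in Yout -> (n.+1 <= 2 * #|P j|)%N.
  move=> j Hj.
  have H1 : (n <= 2 * #|P j|)%N.
    have -> : (2 * #|P j| = \sum_(S in P j) #|S|)%N.
      rewrite (eq_bigr (fun _ => 2%N)); last first.
        by move=> S; rewrite !inE => /andP [/eqP -> _].
      by rewrite sum_nat_const mulnC.
    apply: (leq_trans _ (card_bigcup_le (P j) (fun S => S))).
    rewrite -{1}(card_ord n) -cardsT; apply: subset_leq_card; apply/subsetP => i _.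
    by have [S HS HiS] := Hcover j Hj i; apply/bigcupP; exists S.
  rewrite ltn_neqAle H1 andbT; apply/eqP => E.
  by move: Hodd; rewrite E oddM.
have Hsum : (\sum_(j in Yout) #|P j| <= 'C(n, 2))%N.
  have -> : 'C(n, 2) = #|D| by rewrite card_draws card_ord.
  have E : forall j, #|P j| = (\sum_(S in D) (g S == Some (inr j)))%N.
    move=> j; rewrite -sum1_card big_mkcond /= [RHS]big_mkcond /=.
    by apply: eq_bigr => S _; rewrite !inE; case: (#|S| == 2%N); case: (g S == _).
  rewrite (eq_bigr _ (fun j _ => E j)) exchange_big /= -sum1_card.
  apply: leq_sum => S _.
  case: (g S) => [[x|j1]|]; [by rewrite big1 | | by rewrite big1].
  case: (boolP (j1 \in Yout)) => Hj1.
    rewrite (bigD1 j1) //= eqxx big1 // => j /andP [_ Hne].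
    by case: eqP => // H; move: Hne; case: H => ->; rewrite eqxx.
  rewrite big1 // => j Hj.
  by case: eqP => // H; move: Hj1; case: H => ->; rewrite Hj.
have Hk : (#|Yout| * n.+1 <= n * n.-1)%N.
  have E2 : (2 * 'C(n, 2) = n * n.-1)%N.
    rewrite bin2odd //.
    have -> : n.-1 = (n./2).*2 by rewrite -{1}(odd_double_half n) Hodd add1n.
    by rewrite doubleK -mul2n mulnCA.
  have H1 : (#|Yout| * n.+1 <= 2 * \sum_(j in Yout) #|P j|)%N.
    rewrite -sum_nat_const big_distrr /=; apply: leq_sum => j Hj; exact: Hlow.
  rewrite -E2; apply: leq_trans H1 _; by rewrite leq_mul2l Hsum orbT.
have Hcard : (n + m <= #|U| + #|Yout|)%N.
  have Hc : (#|~: U| <= #|Yout|)%N.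
    apply: (leq_trans _ (leq_imset_card inr Yout)).
    apply: subset_leq_card; apply/subsetP => x; rewrite inE; case: x => [i|j] Hx.
      by move: Hx; rewrite (subsetP HX) // inE.
    by apply: imset_f; rewrite inE.
  have := cardsC U; rewrite card_sum !card_ord => E.
  lia.
have Hnat : (2 * n + m * (n + 1) <= #|U| * (n + 1))%N by nia.
have -> : (2 * n)%:R / (n + 1)%:R + m%:R = (2 * n + m * (n + 1))%:R / (n + 1)%:R :> rat.
  rewrite !natrD !natrM; field; by rewrite natr1 pnatr_eq0.
rewrite ler_pdivrMr; last by rewrite ltr0n addn1.
by rewrite -natrM ler_nat.
Qed.
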